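(* Let $m\ge2$, let $C=\mathrm{diag}(c_1,\dots,c_m)$ be a real diagonal matrix, and let $L(\rho)=-2\,\mathrm{tr}(C\rho)$ on $\dot P_m$, whose gradient system with respect to the quantum SLD Fisher metric is $\frac{d\rho}{dt}=(\rho C+C\rho)-2\,\mathrm{tr}(\rho C)\rho$. Let $\Lambda(w)=-\frac12w^TCw$ on $\mathcal S_m$, with gradient $\mathrm{grad}\,\Lambda(w)=-Cw+(w^TCw)w$ (so that $\frac{dw}{dt}=-\mathrm{grad}\,\Lambda(w)=Cw-(w^TCw)w$ is the averaged learning equation of Hebb type), and let $\mu_\ast\mathrm{grad}\,\Lambda$ be the vector field on $\mathcal D_m$ defined by $\mu_\ast\mathrm{grad}\,\Lambda(\mu(w))=\mu_{\ast,w}(\mathrm{grad}\,\Lambda(w))$ for $w\in\mathcal S_m$. Then for every $\Theta\in\mathcal D_m$, $$\mathrm{grad}\,L(\Theta)=\mu_\ast\mathrm{grad}\,\Lambda(\Theta).$$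
   Context: $\mathcal S_m=\{w\in\mathbf R^m:\|w\|=1,\ w_k\ne0\ \forall k\}$ with $T_w\mathcal S_m=\{u:w^Tu=0\}$ and metric $u^Tu'$; $\mathcal D_m=\{\mathrm{diag}(\theta_1,\dots,\theta_m):\sum\theta_k=1,\theta_k>0\}\subset\dot P_m$; $\mu:\mathcal S_m\to\mathcal D_m$, $\mu(w)=\mathrm{diag}(w_1^2,\dots,w_m^2)$, with differential $\mu_{\ast,w}(u)=2\,\mathrm{diag}(w_1u_1,\dots,w_mu_m)$. (The vector field $\mu_\ast\mathrm{grad}\,\Lambda$ is well defined since $\mu(w)=\mu(w')$ iff $w'$ is obtained from $w$ by coordinate sign changes, under which $\mathrm{grad}\,\Lambda$ is equivariant.) $\dot P_m$ is the set of $m\times m$ complex Hermitian positive definite trace-one matrices, $T_\rho\dot P_m$ the Hermitian traceless matrices. The SLD $\mathcal L_\rho(\Xi)$ is the Hermitian solution of $\frac12(\rho\mathcal L_\rho(\Xi)+\mathcal L_\rho(\Xi)\rho)=\Xi$; the quantum SLD Fisher metric is $\langle\Xi,\Xi'\rangle_\rho=\frac12\mathrm{tr}[\rho(\mathcal L_\rho(\Xi)\mathcal L_\rho(\Xi')+\mathcal L_\rho(\Xi')\mathcal L_\rho(\Xi))]$. The gradient $\mathrm{grad}\,L(\rho)\in T_\rho\dot P_m$ is defined by $\langle\mathrm{grad}\,L(\rho),\Xi\rangle_\rho=\frac{d}{d\tau}\big|_{\tau=0}L(r(\tau))$ for every smooth curve $r$ in $\dot P_m$ with $r(0)=\rho$,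 $r'(0)=\Xi$. *)

(* Defs.v *)
From mathcomp Require Import all_boot all_order all_algebra.
From mathcomp Require Import all_classical all_reals all_analysis.
From mathcomp Require Import complex.
Import Order.TTheory GRing.Theory Num.Theory.
Set Implicit Arguments. Unset Strict Implicit. Unset Printing Implicit Defensive.
Local Open Scope ring_scope.
Local Open Scope complex_scope.

Definition cmx (R : realType) (m n : nat) (A : 'M[R]_(m, n)) : 'M[R[i]]_(m, n) :=
  map_mx (fun x => x%:C) A.

Definition adjmx (R : realType) (m n : nat) (A : 'M[R[i]]_(m, n)) : 'M[R[i]]_(n, m) :=
  (map_mx conjc A)^T.

Definition hermitian (R : realType) (m : nat) (A : 'M[R[i]]_m) : Prop :=
  adjmx A = A.

Definition inP (R : realType) (m : nat) (rho : 'M[R[i]]_m) : Prop :=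
  [/\ hermitian rho,
      (forall v : 'cV[R[i]]_m, v != 0 -> 0 < (adjmx v *m rho *m v) 0 0)
    & \tr rho = 1].

Definition tangentP (R : realType) (m : nat) (Xi : 'M[R[i]]_m) : Prop :=
  hermitian Xi /\ \tr Xi = 0.

(* symmetric logarithmic derivative: the Hermitian solution X of
   (rho X + X rho)/2 = Xi  (unique for rho in \dot P_m) *)
Definition SLD (R : realType) (m : nat) (rho Xi : 'M[R[i]]_m) : 'M[R[i]]_m :=
  xget 0 [set X : 'M[R[i]]_m | hermitian X /\
                 (2%:R^-1 : R[i]) *: (rho *m X + X *m rho) = Xi]%classic.

Definition qfisher (R : realType) (m : nat) (rho Xi Xi' : 'M[R[i]]_m) : R[i] :=
  2%:R^-1 * \tr (rho *m (SLD rho Xi *m SLD rho Xi' + SLD rho Xi' *m SLD rho Xi)).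

Definition smooth_on (R : realType) (I : set R) (f : R -> R) : Prop :=
  forall (n : nat) (x : R), I x -> derivable (iter n (@derive1 R R) f) x 1.

Definition smooth_curve_through (R : realType) (m : nat) (r : R -> 'M[R[i]]_m)
    (e : R) (rho Xi : 'M[R[i]]_m) : Prop :=
  [/\ 0 < e,
      (forall t : R, `]-e, e[%classic t -> inP (r t)),
      (forall i j, smooth_on `]-e, e[%classic (fun t => complex.Re (r t i j)) /\
                   smooth_on `]-e, e[%classic (fun t => complex.Im (r t i j))),
      r 0 = rho
    & (forall i j, derive1 (fun t => complex.Re (r t i j)) 0 = complex.Re (Xi i j) /\
                   derive1 (fun t => complex.Im (r t i j)) 0 = complex.Im (Xi i j))].

Definition is_qgrad (R : realType) (m : nat) (L : 'M[R[i]]_m -> R)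
    (rho G : 'M[R[i]]_m) : Prop :=
  tangentP G /\
  forall (r : R -> 'M[R[i]]_m) (e : R) (Xi : 'M[R[i]]_m),
    smooth_curve_through r e rho Xi ->
    derivable (fun t => L (r t)) 0 1 /\
    (derive1 (fun t => L (r t)) 0)%:C = qfisher rho G Xi.

(* L(rho) = -2 tr(C rho) (real for Hermitian rho; we take the real part) *)
Definition Lqobj (R : realType) (m : nat) (C : 'M[R]_m) (rho : 'M[R[i]]_m) : R :=
  - 2%:R * complex.Re (\tr (cmx C *m rho)).

Definition inS (R : realType) (m : nat) (w : 'cV[R]_m) : Prop :=
  (w^T *m w) 0 0 = 1 /\ forall k, w k 0 != 0.

Definition inD (R : realType) (m : nat) (Theta : 'M[R]_m) : Prop :=
  [/\ is_diag_mx Theta, (forall k, 0 < Theta k k) & \tr Theta = 1].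

Definition mu (R : realType) (m : nat) (w : 'cV[R]_m) : 'M[R]_m :=
  diag_mx (\row_k (w k 0 ^+ 2)).

Definition mu_star (R : realType) (m : nat) (w u : 'cV[R]_m) : 'M[R]_m :=
  diag_mx (\row_k (2%:R * (w k 0 * u k 0))).

Definition Lambda (R : realType) (m : nat) (C : 'M[R]_m) (w : 'cV[R]_m) : R :=
  - 2%:R^-1 * (w^T *m C *m w) 0 0.
Definition gradLambda (R : realType) (m : nat) (C : 'M[R]_m) (w : 'cV[R]_m) : 'cV[R]_m :=
  - (C *m w) + (w^T *m C *m w) 0 0 *: w.

(* Main.v *)
Require Import Defs.
From mathcomp Require Import all_boot all_order all_algebra.
From mathcomp Require Import all_classical all_reals all_analysis.
From mathcomp Require Import complex.
From mathcomp Require Import ring lra.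
Import Order.TTheory GRing.Theory Num.Theory.
Local Open Scope ring_scope.
Local Open Scope complex_scope.

Section S.
Variable R : realType.
Variable m : nat.
Variable th : 'rV[R]_m.
Hypothesis thp : forall k, 0 < th 0 k.

Definition rhoC : 'M[R[i]]_m := diag_mx (\row_k (th 0 k)%:C).

Lemma Cneq0 (x : R) : x != 0 -> x%:C != 0 :> R[i].
Proof. move=> h; apply/eqP => e; have := congr1 (@complex.Re R) e => /= e'. by rewrite e' eqxx in h. Qed.

Lemma den_neq0 i j : (th 0 i + th 0 j)%:C != 0 :> R[i].
Proof. apply: Cneq0; have := thp i; have := thp j; move=> a b; rewrite gt_eqF //; exact: addr_gt0. Qed.

Definition SolM (Xi : 'M[R[i]]_m) : 'M[R[i]]_m :=
  \matrix_(i, j) (2%:R * Xi i j / (th 0 i + th 0 j)%:C).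

Lemma sol_uniq (Xi X : 'M[R[i]]_m) :
  (2%:R^-1 : R[i]) *: (rhoC *m X + X *m rhoC) = Xi -> X = SolM Xi.
Proof.
move=> <-; apply/matrixP => i j.
rewrite /SolM /rhoC mul_diag_mx mul_mx_diag !mxE.
have := den_neq0 i j; rewrite rmorphD /=.
move=> h. field. exact: h.
Qed.

Lemma sol_herm (Xi : 'M[R[i]]_m) : Defs.hermitian Xi ->
  Defs.hermitian (SolM Xi) /\ (2%:R^-1 : R[i]) *: (rhoC *m SolM Xi + SolM Xi *m rhoC) = Xi.
Proof.
move=> hX; split.
  apply/matrixP => i j; rewrite /adjmx /SolM !mxE.
  have -> : Xi i j = conjc (Xi j i).
    by rewrite -[in LHS]hX /adjmx !mxE.
  have cr : forall x : R, conjc (x%:C) = x%:C.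
    by move=> x; apply/eqP; rewrite eq_complex /= oppr0 !eqxx.
  rewrite !(rmorphM conjc) (fmorphV conjc) (rmorph_nat conjc).
  congr (_ * _ / _); apply/eqP; rewrite eq_complex /= oppr0 addrC !eqxx //.
apply/matrixP => i j.
rewrite /SolM /rhoC mul_diag_mx mul_mx_diag !mxE.
have := den_neq0 i j; rewrite rmorphD /= => h. field. exact: h.
Qed.

Lemma SLD_eq (Xi : 'M[R[i]]_m) : Defs.hermitian Xi -> SLD rhoC Xi = SolM Xi.
Proof.
move=> hX; rewrite /SLD.
have := @xgetPex _ 0 [set X : 'M[R[i]]_m | Defs.hermitian X /\
                 (2%:R^-1 : R[i]) *: (rhoC *m X + X *m rhoC) = Xi]%classic.
case. by exists (SolM Xi); apply: sol_herm.
move=> _ h; exact: sol_uniq h.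
Qed.

Lemma qfisher_eq (G Xi : 'M[R[i]]_m) : Defs.hermitian G -> Defs.hermitian Xi ->
  (forall i j, i != j -> G i j = 0) ->
  qfisher rhoC G Xi = \sum_i G i i * Xi i i / (th 0 i)%:C.
Proof.
move=> hG hX G0; rewrite /qfisher !SLD_eq // /mxtrace mulr_sumr.
apply: eq_bigr => i _.
rewrite /rhoC mul_diag_mx !mxE.
rewrite (bigD1 i) //= big1 ?addr0; last first.
  by move=> j ji; rewrite /SolM !mxE G0 ?mul0r ?mulr0 ?mul0r // eq_sym.
rewrite (bigD1 i) //= big1 ?addr0; last first.
  by move=> j ji; rewrite /SolM !mxE (G0 j i ji) !(mulr0, mul0r).
have h1 := den_neq0 i i. have h2 : (th 0 i)%:C != 0 :> R[i].
  by apply: Cneq0; rewrite gt_eqF.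
move: h1; rewrite rmorphD /= => h1.
rewrite /SolM !mxE. field. by rewrite h1 h2.
Qed.
End S.
Arguments rhoC {R m}.
Arguments SolM {R m}.

Lemma ReS (R : realType) n (F : 'I_n -> R[i]) :
  complex.Re (\sum_(k < n) F k) = \sum_(k < n) complex.Re (F k).
Proof.
apply: (big_ind2 (fun a b => complex.Re a = b)) => // x a y b <- <-.
by case: x => ? ?; case: y.
Qed.

Lemma herm_cmx_diag (R : realType) n (d : 'rV[R]_n) : Defs.hermitian (cmx (diag_mx d)).
Proof.
apply/matrixP => i j; rewrite /adjmx /cmx !mxE.
have [->|ne] := eqVneq i j; first by rewrite !mulr1n; apply/eqP; rewrite eq_complex /= oppr0 !eqxx.
by rewrite !mulr0n conjc0.
Qed.

Theorem theorem1 (R : realType) (m : nat) (hm : (2 <= m)%N) (c : 'rV[R]_m)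
    (Theta : 'M[R]_m) (hTheta : inD Theta)
    (w : 'cV[R]_m) (hw : inS w) (hmu : mu w = Theta) :
  is_qgrad (Lqobj (diag_mx c)) (cmx Theta)
    (cmx (mu_star w (gradLambda (diag_mx c) w))).
Proof.
case: hw => hw1 hw0.
pose th : 'rV[R]_m := \row_k (w k 0 ^+ 2).
have thp : forall k, 0 < th 0 k.
  by move=> k; rewrite mxE lt_def sqrf_eq0 hw0 sqr_ge0.
have hT : cmx Theta = rhoC th.
  by rewrite -hmu; apply/matrixP => i j; rewrite /cmx /mu /rhoC !mxE rmorphMn.
rewrite hT.
set s := (w^T *m diag_mx c *m w) 0 0.
have sE : s = \sum_i w i 0 * (c 0 i * w i 0).
  rewrite /s !mxE; apply: eq_bigr => i _; rewrite mul_mx_diag !mxE; ring.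
have w1 : \sum_i w i 0 * w i 0 = 1.
  by rewrite -hw1 !mxE; apply: eq_bigr => i _; rewrite !mxE.
pose g i := 2 * (w i 0 * (- (c 0 i * w i 0) + s * w i 0)).
have GE : mu_star w (gradLambda (diag_mx c) w) = diag_mx (\row_i g i).
  apply/matrixP => i j; rewrite /mu_star /gradLambda -/s mul_diag_mx !mxE.
  by [].
rewrite GE.
have hG := @herm_cmx_diag _ _ (\row_i g i).
split.
  split => //.
  rewrite /mxtrace (eq_bigr (fun i => (g i)%:C)); last by move=> i _; rewrite /cmx !mxE eqxx mulr1n.
  rewrite -rmorph_sum /=.
  have -> : \sum_i g i = 0.
    rewrite /g (eq_bigr (fun i => 2 * s * (w i 0 * w i 0) - 2 * (w i 0 * (c 0 i * w i 0)))); last by move=> i _; ring.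
    by rewrite sumrB -!mulr_sumr w1 -sE mulr1 subrr.
  by [].
move=> r e Xi [e0 hin hsm r0 hder].
have x0 : `]-e, e[%classic 0.
  by rewrite /= in_itv /= oppr_lt0 e0.
have nr : \forall t \near 0, `]-e, e[%classic t.
  by apply: near_in_itvoo; rewrite in_itv /= oppr_lt0 e0.
pose f i j t := complex.Re (r t i j).
pose h i j t := complex.Im (r t i j).
have fd : forall i j : 'I_m, is_derive (0:R) (1:R) (f i j) (complex.Re (Xi i j)).
  move=> i j; rewrite -(hder i j).1 derive1E; apply: derivableP.
  exact: ((hsm i j).1 0%N 0 x0).
have hd : forall i j : 'I_m, is_derive (0:R) (1:R) (h i j) (complex.Im (Xi i j)).
  move=> i j; rewrite -(hder i j).2 derive1E; apply: derivableP.
  exact: ((hsm i j).2 0%N 0 x0).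
have rH : forall t, `]-e, e[%classic t -> forall i j, r t i j = conjc (r t j i).
  move=> t ht i j; case: (hin t ht) => hh _ _.
  by move: hh; rewrite /Defs.hermitian => hh; have := congr1 (fun M : 'M[R[i]]_m => M i j) hh; rewrite /adjmx !mxE => <-.
have XRe : forall i j, complex.Re (Xi i j) = complex.Re (Xi j i).
  move=> i j; rewrite -(hder i j).1 -(hder j i).1 !derive1E.
  apply: near_eq_derive; apply: filterS nr => t ht /=.
  by rewrite (rH t ht i j); case: (r t j i).
have XIm : forall i j, complex.Im (Xi i j) = - complex.Im (Xi j i).
  move=> i j; rewrite -(hder i j).2 -(hder j i).2 !derive1E -deriveN; last first.
    exact: ((hsm j i).2 0%N 0 x0).
  apply: near_eq_derive; apply: filterS nr => t ht /=.
  rewrite (rH t ht i j) -[RHS]/(- complex.Im (r t j i)); by case: (r t j i).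
have hX : Defs.hermitian Xi.
  apply/matrixP => i j; rewrite /adjmx !mxE.
  apply/eqP; rewrite eq_complex; apply/andP; split; apply/eqP.
    by rewrite XRe; case: (Xi j i).
  by rewrite XIm; case: (Xi j i).
have Xd : forall k, Xi k k = (complex.Re (Xi k k))%:C.
  move=> k; have := XIm k k; case: (Xi k k) => a b /= hb.
  by apply/eqP; rewrite eq_complex /= eqxx /=; apply/eqP; lra.
have trX : \sum_k complex.Re (Xi k k) = 0.
  have isd : is_derive (0:R) (1:R) (\sum_(k < m) f k k) (\sum_k complex.Re (Xi k k)).
    by apply: is_derive_sum => k; exact: fd.
  have isd2 : is_derive (0:R) (1:R) (cst (1:R)) (\sum_k complex.Re (Xi k k)).
    apply: near_eq_is_derive isd; apply: filterS nr => t ht; rewrite fct_sumE.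
    case: (hin t ht) => _ _ htr.
    by have := congr1 (@complex.Re R) htr; rewrite /mxtrace ReS.
  by rewrite -(@derive_val _ _ _ _ _ _ _ isd2) derive_cst.
have cC : cmx (diag_mx c) = diag_mx (\row_k (c 0 k)%:C).
  by apply/matrixP => i j; rewrite /cmx !mxE rmorphMn.
have LE : (fun t => Lqobj (diag_mx c) (r t)) = \sum_(k < m) (fun t => (-2 * c 0 k) * f k k t).
  apply: funext => t; rewrite fct_sumE /Lqobj cC mul_diag_mx /mxtrace ReS mulr_sumr.
  apply: eq_bigr => k _; rewrite /f !mxE; case: (r t k k) => a b /=; ring.
have isL : is_derive (0:R) (1:R) (\sum_(k < m) (fun t => (-2 * c 0 k) * f k k t))
    (\sum_(k < m) (-2 * c 0 k) * complex.Re (Xi k k)).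
  apply: is_derive_sum => k; exact: (is_deriveZ (-2 * c 0 k) (fd k k)).
split.
  rewrite LE; exact: (@ex_derive _ _ _ _ _ _ _ isL).
rewrite LE derive1E (@derive_val _ _ _ _ _ _ _ isL).
have G0 : forall i j, i != j -> cmx (diag_mx (\row_i g i)) i j = 0.
  by move=> i j ij; rewrite /cmx !mxE (negPf ij) mulr0n.
rewrite (@qfisher_eq R m th thp _ _ hG hX G0).
rewrite rmorph_sum; apply/esym.
rewrite (eq_bigr (fun k => (2 * s * complex.Re (Xi k k) - 2 * c 0 k * complex.Re (Xi k k))%:C)); last first.
  move=> k _; rewrite Xd /cmx !mxE eqxx mulr1n -rmorphM -fmorphV -rmorphM; congr (_%:C).
  rewrite /g; have := hw0 k; move=> wk; field; exact: wk.
rewrite -!(rmorph_sum (real_complex R)) sumrB -mulr_sumr trX mulr0 sub0r; congr (_%:C).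
rewrite -sumrN; apply: eq_bigr => k _; ring.
Qed.
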